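(* There is $N_0$ such that for all $N \geq N_0$, \[ \psi(N,6,3) \geq 1.2228. \]
   Context: $[N] = \{1,2,\dots,N\}$. For positive integers $K$ and $h \geq 3$, let $\mathcal{F}_{K,h}$ be the set of all functions $F(x) = \sum_{j=1}^K b_j \cos(jx)$ with real coefficients satisfying $\sum_{j=1}^K |b_j| = \frac{1}{\cos(\pi/h)}$. For nonempty $A \subseteq [N]$ and $F \in \mathcal{F}_{K,h}$ let $w_F(A) = \sum_{a \in A} F\!\left( \left(a - \frac{N+1}{2}\right) \frac{2\pi}{hN} \right)$, and let \[ \psi(N,K,h) = \min_{\emptyset \neq A \subseteq [N]} \sup \left\{ \frac{w_F(A)}{|A|} : F \in \mathcal{F}_{K,h} \right\}. \] *)

(* Defs.v *)
From Stdlib Require Import Reals List.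
Import ListNotations.
Open Scope R_scope.

Definition sum1 (K : nat) (f : nat -> R) : R :=
  fold_right Rplus 0 (map f (seq 1 K)).

Definition Fcos (K : nat) (b : nat -> R) (x : R) : R :=
  sum1 K (fun j => b j * cos (INR j * x)).

Definition in_family (K h : nat) (b : nat -> R) : Prop :=
  sum1 K (fun j => Rabs (b j)) = 1 / cos (PI / INR h).

Definition valid_subset (N : nat) (A : list nat) : Prop :=
  A <> [] /\ NoDup A /\ (forall a, In a A -> (1 <= a <= N)%nat).

Definition wF (N K h : nat) (b : nat -> R) (A : list nat) : R :=
  fold_right Rplus 0
    (map (fun a => Fcos K b ((INR a - (INR N + 1) / 2) * (2 * PI / (INR h * INR N)))) A).

Definition ratio_set (N K h : nat) (A : list nat) : R -> Prop :=
  fun r => exists b, in_family K h b /\ r = wF N K h b A / INR (length A).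

(* psi(N,K,h) >= c, i.e. min over nonempty A of sup(ratio_set) >= c:
   for every nonempty A ⊆ [N], the supremum of ratio_set exists and is >= c. *)
Definition psi_ge (N K h : nat) (c : R) : Prop :=
  forall A, valid_subset N A ->
    exists s, is_lub (ratio_set N K h A) s /\ c <= s.

(* Main.v *)
Require Import Defs.
From Stdlib Require Import Reals List Lra Psatz Lia.
Open Scope R_scope.
Definition Pp (t:R) := 116/75 * t + (-37/100) * (4*t^3 - 3*t) + 1/12 * (32*t^6 - 48*t^4 + 18*t^2 - 1).
Lemma P_ge0 (t:R) : (1/2) <= t <= (3/4) -> 12228/10000 <= Pp t.
Proof. intros [H1 H2]. unfold Pp.
  assert (0 <= (t - (1/2))^0 * ((3/4) - t)^6) by (apply Rmult_le_pos; apply pow_le; lra).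
  assert (0 <= (t - (1/2))^1 * ((3/4) - t)^5) by (apply Rmult_le_pos; apply pow_le; lra).
  assert (0 <= (t - (1/2))^2 * ((3/4) - t)^4) by (apply Rmult_le_pos; apply pow_le; lra).
  assert (0 <= (t - (1/2))^3 * ((3/4) - t)^3) by (apply Rmult_le_pos; apply pow_le; lra).
  assert (0 <= (t - (1/2))^4 * ((3/4) - t)^2) by (apply Rmult_le_pos; apply pow_le; lra).
  assert (0 <= (t - (1/2))^5 * ((3/4) - t)^1) by (apply Rmult_le_pos; apply pow_le; lra).
  assert (0 <= (t - (1/2))^6 * ((3/4) - t)^0) by (apply Rmult_le_pos; apply pow_le; lra).
  lra. Qed.
Lemma P_ge1 (t:R) : (3/4) <= t <= (7/8) -> 12228/10000 <= Pp t.
Proof. intros [H1 H2]. unfold Pp.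
  assert (0 <= (t - (3/4))^0 * ((7/8) - t)^6) by (apply Rmult_le_pos; apply pow_le; lra).
  assert (0 <= (t - (3/4))^1 * ((7/8) - t)^5) by (apply Rmult_le_pos; apply pow_le; lra).
  assert (0 <= (t - (3/4))^2 * ((7/8) - t)^4) by (apply Rmult_le_pos; apply pow_le; lra).
  assert (0 <= (t - (3/4))^3 * ((7/8) - t)^3) by (apply Rmult_le_pos; apply pow_le; lra).
  assert (0 <= (t - (3/4))^4 * ((7/8) - t)^2) by (apply Rmult_le_pos; apply pow_le; lra).
  assert (0 <= (t - (3/4))^5 * ((7/8) - t)^1) by (apply Rmult_le_pos; apply pow_le; lra).
  assert (0 <= (t - (3/4))^6 * ((7/8) - t)^0) by (apply Rmult_le_pos; apply pow_le; lra).
  lra. Qed.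
Lemma P_ge2 (t:R) : (7/8) <= t <= (15/16) -> 12228/10000 <= Pp t.
Proof. intros [H1 H2]. unfold Pp.
  assert (0 <= (t - (7/8))^0 * ((15/16) - t)^6) by (apply Rmult_le_pos; apply pow_le; lra).
  assert (0 <= (t - (7/8))^1 * ((15/16) - t)^5) by (apply Rmult_le_pos; apply pow_le; lra).
  assert (0 <= (t - (7/8))^2 * ((15/16) - t)^4) by (apply Rmult_le_pos; apply pow_le; lra).
  assert (0 <= (t - (7/8))^3 * ((15/16) - t)^3) by (apply Rmult_le_pos; apply pow_le; lra).
  assert (0 <= (t - (7/8))^4 * ((15/16) - t)^2) by (apply Rmult_le_pos; apply pow_le; lra).
  assert (0 <= (t - (7/8))^5 * ((15/16) - t)^1) by (apply Rmult_le_pos; apply pow_le; lra).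
  assert (0 <= (t - (7/8))^6 * ((15/16) - t)^0) by (apply Rmult_le_pos; apply pow_le; lra).
  lra. Qed.
Lemma P_ge3 (t:R) : (15/16) <= t <= (1/1) -> 12228/10000 <= Pp t.
Proof. intros [H1 H2]. unfold Pp.
  assert (0 <= (t - (15/16))^0 * ((1/1) - t)^6) by (apply Rmult_le_pos; apply pow_le; lra).
  assert (0 <= (t - (15/16))^1 * ((1/1) - t)^5) by (apply Rmult_le_pos; apply pow_le; lra).
  assert (0 <= (t - (15/16))^2 * ((1/1) - t)^4) by (apply Rmult_le_pos; apply pow_le; lra).
  assert (0 <= (t - (15/16))^3 * ((1/1) - t)^3) by (apply Rmult_le_pos; apply pow_le; lra).
  assert (0 <= (t - (15/16))^4 * ((1/1) - t)^2) by (apply Rmult_le_pos; apply pow_le; lra).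
  assert (0 <= (t - (15/16))^5 * ((1/1) - t)^1) by (apply Rmult_le_pos; apply pow_le; lra).
  assert (0 <= (t - (15/16))^6 * ((1/1) - t)^0) by (apply Rmult_le_pos; apply pow_le; lra).
  lra. Qed.
Lemma cos3 x : cos (3*x) = 4*cos x^3 - 3*cos x.
Proof.
  replace (3*x) with (2*x + x) by ring. rewrite cos_plus, cos_2a_cos, sin_2a.
  pose proof (sin2_cos2 x) as H. unfold Rsqr in H.
  replace (2 * sin x * cos x * sin x) with (2*cos x*(sin x*sin x)) by ring.
  replace (sin x * sin x) with (1 - cos x * cos x) by lra. ring.
Qed.
Lemma cos6 x : cos (6*x) = 32*cos x^6 - 48*cos x^4 + 18*cos x^2 - 1.
Proof.
  replace (6*x) with (2*(3*x)) by ring. rewrite cos_2a_cos, cos3. ring.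
Qed.
Lemma cos_ge_half x : Rabs x <= PI/3 -> 1/2 <= cos x.
Proof.
  intros H. rewrite <- cos_PI3.
  assert (Ea : cos x = cos (Rabs x)).
  { unfold Rabs; destruct (Rcase_abs x); [rewrite cos_neg|]; reflexivity. }
  rewrite Ea.
  assert (Hp := PI_RGT_0). pose proof (Rabs_pos x).
  destruct (Req_dec (Rabs x) (PI/3)) as [E|E].
  - rewrite E; lra.
  - left. apply cos_decreasing_1; lra.
Qed.

Lemma Pp_ge t : 1/2 <= t <= 1 -> 12228/10000 <= Pp t.
Proof.
  intros [H1 H2].
  destruct (Rle_dec t (3/4)); [apply P_ge0; lra|].
  destruct (Rle_dec t (7/8)); [apply P_ge1; lra|].
  destruct (Rle_dec t (15/16)); [apply P_ge2; lra|apply P_ge3; lra].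
Qed.

Definition bb (j : nat) : R :=
  match j with 1%nat => 116/75 | 3%nat => -37/100 | 6%nat => 1/12 | _ => 0 end.

Lemma Fcos_bb x : Fcos 6 bb x = Pp (cos x).
Proof.
  unfold Fcos, sum1, Pp. cbn [seq map fold_right bb].
  replace (INR 1) with 1 by (simpl; lra).
  replace (INR 3) with 3 by (simpl; lra).
  replace (INR 6) with 6 by (simpl; lra).
  rewrite cos3, cos6, Rmult_1_l. ring.
Qed.

Lemma in_family_bb : in_family 6 3 bb.
Proof.
  unfold in_family, sum1. cbn [seq map fold_right bb].
  replace (INR 3) with 3 by (simpl; lra). rewrite cos_PI3.
  rewrite Rabs_R0. rewrite (Rabs_right (116/75)) by lra.
  rewrite (Rabs_left (-37/100)) by lra. rewrite (Rabs_right (1/12)) by lra. field.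
Qed.

Lemma fold_abs_le (f g : nat -> R) l :
  (forall j, Rabs (f j) <= g j) ->
  Rabs (fold_right Rplus 0 (map f l)) <= fold_right Rplus 0 (map g l).
Proof.
  intros H; induction l as [|a l IH]; simpl.
  - rewrite Rabs_R0; lra.
  - eapply Rle_trans; [apply Rabs_triang|]. specialize (H a). lra.
Qed.

Lemma fold_le_M (f : nat -> R) M l :
  (forall a, In a l -> f a <= M) -> fold_right Rplus 0 (map f l) <= M * INR (length l).
Proof.
  induction l as [|a l IH]; intros H; cbn [map fold_right length].
  - simpl; lra.
  - rewrite S_INR. assert (f a <= M) by (apply H; left; auto).
    assert (fold_right Rplus 0 (map f l) <= M * INR (length l)) by (apply IH; intros; apply H; right; auto).
    lra.
Qed.

Lemma fold_ge_M (f : nat -> R) M l :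
  (forall a, In a l -> M <= f a) -> M * INR (length l) <= fold_right Rplus 0 (map f l).
Proof.
  induction l as [|a l IH]; intros H; cbn [map fold_right length].
  - simpl; lra.
  - rewrite S_INR. assert (M <= f a) by (apply H; left; auto).
    assert (M * INR (length l) <= fold_right Rplus 0 (map f l)) by (apply IH; intros; apply H; right; auto).
    lra.
Qed.

Lemma x_range (a N : nat) : (1 <= a <= N)%nat ->
  Rabs ((INR a - (INR N + 1) / 2) * (2 * PI / (INR 3 * INR N))) <= PI/3.
Proof.
  intros [Ha HN].
  apply le_INR in Ha. apply le_INR in HN. simpl in Ha.
  replace (INR 3) with 3 by (simpl; lra).
  assert (Hp := PI_RGT_0).
  set (u := INR a) in *. set (n := INR N) in *.
  set (k := 2 * PI / (3 * n)).
  assert (Hk : k * n * 3 = 2 * PI) by (unfold k; field; lra).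
  assert (Hk0 : 0 < k) by (unfold k; apply Rdiv_lt_0_compat; lra).
  apply Rabs_le. split; nra.
Qed.

Lemma bound_F (b : nat -> R) x : in_family 6 3 b -> Fcos 6 b x <= 2.
Proof.
  intros Hb. unfold in_family in Hb.
  replace (INR 3) with 3 in Hb by (simpl; lra). rewrite cos_PI3 in Hb.
  unfold Fcos.
  assert (H := fold_abs_le (fun j => b j * cos (INR j * x)) (fun j => Rabs (b j)) (seq 1 6)).
  unfold sum1 in *.
  assert (Rabs (fold_right Rplus 0 (map (fun j => b j * cos (INR j * x)) (seq 1 6))) <= 2).
  { replace 2 with (1/(1/2)) by field. rewrite <- Hb. apply H.
    intros j. rewrite Rabs_mult. pose proof (Rabs_pos (b j)).
    pose proof (COS_bound (INR j * x)). assert (Rabs (cos (INR j * x)) <= 1) by (apply Rabs_le; lra).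
    nra. }
  apply Rabs_le_between in H0 || (pose proof (Rle_abs (fold_right Rplus 0 (map (fun j => b j * cos (INR j * x)) (seq 1 6))))); lra.
Qed.

Theorem theorem3p2 :
  exists N0 : nat, forall N : nat, (N0 <= N)%nat -> psi_ge N 6 3 (12228 / 10000).
Proof.
  exists 1%nat. intros N HN A [Hne [_ HA]].
  assert (Hl : 0 < INR (length A)).
  { destruct A; [congruence|]. simpl length. apply lt_0_INR. lia. }
  assert (Hmem : ratio_set N 6 3 A (wF N 6 3 bb A / INR (length A))).
  { exists bb; split; [apply in_family_bb|reflexivity]. }
  assert (Hbd : bound (ratio_set N 6 3 A)).
  { exists 2. intros r [b [Hb ->]].
    apply Rmult_le_reg_r with (INR (length A)); [lra|].
    unfold Rdiv; rewrite Rmult_assoc, Rinv_l by lra. rewrite Rmult_1_r.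
    unfold wF. apply fold_le_M. intros a _. apply bound_F; auto. }
  destruct (completeness _ Hbd (ex_intro _ _ Hmem)) as [s Hs].
  exists s; split; [exact Hs|].
  apply Rle_trans with (wF N 6 3 bb A / INR (length A)); [|apply Hs; exact Hmem].
  apply Rmult_le_reg_r with (INR (length A)); [lra|].
  replace (wF N 6 3 bb A / INR (length A) * INR (length A)) with (wF N 6 3 bb A) by (field; lra).
  unfold wF. apply fold_ge_M. intros a Ha.
  rewrite Fcos_bb. apply Pp_ge. split; [|apply COS_bound].
  apply cos_ge_half. apply x_range. auto.
Qed.
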